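(* Fix $n\ge1$. For every $\beta>0$ there exist compact sets $A,B\subset\mathbb{R}^n$ such that $$|A|\,|A+B+B|>\beta|A+B|^2.$$
   Context: $|\cdot|$ is $n$-dimensional Lebesgue measure and $+$ is Minkowski addition. *)

(* Defs.v *)
From HB Require Import structures.
From mathcomp Require Import all_boot all_order all_algebra.
From mathcomp Require Import all_classical all_reals all_analysis.
Set Implicit Arguments. Unset Strict Implicit. Unset Printing Implicit Defensive.
Import Order.TTheory GRing.Theory Num.Theory.
Import numFieldNormedType.Exports.
Local Open Scope classical_set_scope.
Local Open Scope ring_scope.

(* Points of R^n are row vectors 'rV[R]_n (with the product topology from
   matrix_normedtype). *)

Definition mink_sum {R : realType} {n : nat} (A B : set 'rV[R]_n) : set 'rV[R]_n :=
  [set z | exists a, A a /\ exists b, B b /\ z = a + b].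

Definition box {R : realType} {n : nat} (a b : 'rV[R]_n) : set 'rV[R]_n :=
  [set x | forall i : 'I_n, a ord0 i <= x ord0 i <= b ord0 i].

Definition box_vol {R : realType} {n : nat} (a b : 'rV[R]_n) : R :=
  \prod_(i < n) Num.max (b ord0 i - a ord0 i) 0.

(* Lebesgue measure is the restriction of this
   outer measure to Lebesgue-measurable sets (in particular to compact sets). *)
Definition leb_n {R : realType} {n : nat} (E : set 'rV[R]_n) : \bar R :=
  ereal_inf [set s | exists (a b : nat -> 'rV[R]_n),
     E `<=` \bigcup_k box (a k) (b k) /\
     s = (\sum_(0 <= k <oo) ((box_vol (a k) (b k))%:E))%E].

(* Main.v *)
Require Import Defs.
From HB Require Import structures.
From mathcomp Require Import all_boot all_order all_algebra.
From mathcomp Require Import all_classical all_reals all_analysis.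
From mathcomp Require Import measurable_realfun.
From mathcomp Require Import ring lra zify.
Import Order.TTheory GRing.Theory Num.Theory.
Import numFieldNormedType.Exports.
Local Open Scope classical_set_scope.
Local Open Scope ring_scope.

Section Core.
Variable R : realType.

Definition restr {n} (v : 'rV[R]_n.+1) : 'rV[R]_n := \row_j v ord0 (widen_ord (leqnSn n) j).
Definition ext {n} (v : 'rV[R]_n) (t : R) : 'rV[R]_n.+1 :=
  \row_i (oapp (fun j => v ord0 j) t (unlift ord_max i)).

Lemma widen_lift n (j : 'I_n) : widen_ord (leqnSn n) j = lift ord_max j.
Proof. by apply/val_inj; rewrite /= /bump leqNgt ltn_ord. Qed.

Lemma box_vol_S n (a b : 'rV[R]_n.+1) :
  box_vol a b = box_vol (restr a) (restr b) * Num.max (b ord0 ord_max - a ord0 ord_max) 0.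
Proof. by rewrite /box_vol big_ord_recr /=; congr (_ * _); apply: eq_bigr => i _; rewrite !mxE. Qed.

Lemma box_vol_ge0 n (a b : 'rV[R]_n) : 0 <= box_vol a b.
Proof. by apply: prodr_ge0 => i _; rewrite le_max lexx orbT. Qed.

Lemma cover_lb n : forall (a b : 'rV[R]_n) (ak bk : nat -> 'rV[R]_n) (c : nat -> bool),
 (forall x, box a b x -> exists2 k, c k & box (ak k) (bk k) x) ->
 ((box_vol a b)%:E <= \sum_(0 <= k <oo) ((c k)%:R * box_vol (ak k) (bk k))%:E)%E.
Proof.
elim: n => [|n IH] a b ak bk c cov.
  have [k ck _] := cov a (fun i => match i with Ordinal _ h => False_ind _ (notF h) end).
  rewrite /box_vol big_ord0.
  apply: le_trans (@nneseries_lim_ge R _ xpredT 0 k.+1 _); last first.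
    by move=> i _ _; rewrite lee_fin mulr_ge0 // box_vol_ge0.
  rewrite big_nat_recr //= ck /box_vol big_ord0 mulr1.
  rewrite -[X in (X <= _)%E]add0e; apply: leeD => //.
  by apply: sume_ge0 => i _; rewrite lee_fin mulr_ge0 // box_vol_ge0.

rewrite box_vol_S.
set al := a ord0 ord_max; set bl := b ord0 ord_max.
have [lab|lab] := leP al bl; last first.
  rewrite max_r; last by rewrite subr_le0 ltW.
  rewrite mulr0.
  apply: le_trans (nneseries_ge0 _) => //.
  by move=> i _ _; rewrite lee_fin mulr_ge0 // box_vol_ge0.
rewrite max_l ?subr_ge0 //.
pose J : set R := `[al, bl]%classic.
pose akl k := ak k ord0 ord_max; pose bkl k := bk k ord0 ord_max.
pose Jk k : set R := `[akl k, bkl k]%classic.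
pose v k := ((c k)%:R * box_vol (restr (ak k)) (restr (bk k))).
pose f k (t : R) := (v k * \1_(Jk k) t)%:E.
have v0 k : 0 <= v k by rewrite mulr_ge0 // box_vol_ge0.
have f0 k t : J t -> (0 <= f k t)%E.
  by move=> _; rewrite lee_fin mulr_ge0 // indicE.
have mJ : measurable J by exact: measurable_itv.
have mf k : measurable_fun J (f k).
  apply/measurable_EFinP; apply: measurable_funM => //.
  by apply: measurable_indic; exact: measurable_itv.
have Fge : forall t, J t -> ((box_vol (restr a) (restr b))%:E <= \sum_(0 <= k <oo) f k t)%E.
  move=> t Jt.
  have cov' : forall x', box (restr a) (restr b) x' -> exists2 k,
      c k && (t \in Jk k) & box (restr (ak k)) (restr (bk k)) x'.
    move=> x' bx'.
    have bx : box a b (ext x' t).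
      move=> i; rewrite !mxE; case: (unliftP ord_max i) => [j ->|->] /=.
        by have := bx' j; rewrite !mxE widen_lift.
      by move: Jt; rewrite /J /= in_itv /=.
    have [k ck bk'] := cov (ext x' t) bx.
    exists k.
      rewrite ck /=; apply/mem_set; have := bk' ord_max; rewrite !mxE unlift_none /=.
      by rewrite /Jk /= in_itv.
    move=> j; have := bk' (lift ord_max j); rewrite !mxE liftK /= -widen_lift.
    done.
  have le := IH (restr a) (restr b) (fun k => restr (ak k)) (fun k => restr (bk k))
     (fun k => c k && (t \in Jk k)) cov'.
  apply: le_trans le _; rewrite le_eqVlt; apply/orP; left; apply/eqP; apply: eq_eseriesr => k _.
  rewrite /f /v indicE; congr (_%:E).
  by case: (c k); case: (t \in Jk k); rewrite /= ?(mul1r, mul0r, mulr1, mulr0).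
have muJ : lebesgue_measure J = (bl - al)%:E.
  rewrite /J lebesgue_measure_itv /=.
  rewrite lte_fin; case: ltP => h; first by rewrite -EFinD.
  have -> : bl = al by apply/eqP; rewrite eq_le lab h.
  by rewrite subrr.
have H1 : ((box_vol (restr a) (restr b))%:E * (bl - al)%:E <=
    \int[lebesgue_measure]_(t in J) \sum_(0 <= k <oo) f k t)%E.
  rewrite -muJ -integral_cst //; apply: ge0_le_integral => //.
  - by move=> t _; rewrite lee_fin box_vol_ge0.
  - have h := @ge0_emeasurable_sum _ _ R J f xpredT (fun k x Jx _ => f0 k x Jx) (fun k _ => mf k).
    exact h.
rewrite integral_nneseries // in H1.
rewrite EFinM; apply: le_trans H1 _.
have mJk k : measurable (Jk k) by exact: measurable_itv.
apply: lee_nneseries => [k _ _|k _].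
  by apply: integral_ge0 => t Jt; apply: f0.
rewrite /f.
under eq_integral do rewrite EFinM.
rewrite ge0_integralZl_EFin //; first last.
  have h : measurable_fun J (EFin \o (\1_(Jk k) : R -> R)).
    by apply/measurable_EFinP; apply: measurable_indic.
  exact h.
rewrite (@integral_indic _ _ R lebesgue_measure J mJ (Jk k) (mJk k)).
rewrite box_vol_S mulrA EFinM.
rewrite -EFinM [X in (_ <= X)%E]EFinM.
apply: lee_wpmul2l; first by rewrite lee_fin; apply: v0.
apply: le_trans (@measureIl _ _ _ lebesgue_measure (Jk k) J (mJk k) mJ) _.
rewrite /Jk /= lebesgue_measure_itv /= lte_fin.
case: ltP => h.
  by rewrite -EFinD lee_fin le_max lexx.
by rewrite lee_fin le_max lexx orbT.
Qed.

Lemma box_compact n (a b : 'rV[R]_n) : compact (box a b).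
Proof.
have -> : box a b = [set v : 'rV[R]_n | forall i, `[a ord0 i, b ord0 i]%classic (v ord0 i)].
  by rewrite predeqE => x; split => h i; have := h i; rewrite /= in_itv.
exact: (@rV_compact R n (fun i => `[a ord0 i, b ord0 i]%classic) (fun i => @segment_compact R _ _)).
Qed.

Lemma leb_ge0 n (S : set 'rV[R]_n) : (0 <= leb_n S)%E.
Proof.
apply: le_ereal_inf_tmp => s [ak [bk [_ ->]]].
by apply: nneseries_ge0 => i _ _; rewrite lee_fin box_vol_ge0.
Qed.

Lemma leb_lb n (a b : 'rV[R]_n) (S : set 'rV[R]_n) :
  box a b `<=` S -> ((box_vol a b)%:E <= leb_n S)%E.
Proof.
move=> sub; apply: le_ereal_inf_tmp => s [ak [bk [cov ->]]].
have cov' : forall x, box a b x -> exists2 k, true & box (ak k) (bk k) x.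
  by move=> x /sub /cov [k _ h]; exists k.
apply: le_trans (@cover_lb n a b ak bk _ cov') _.
rewrite le_eqVlt; apply/orP; left; apply/eqP; apply: eq_eseriesr => k _.
by rewrite mul1r.
Qed.

Lemma leb_ub n (hn : (1 <= n)%N) (S : set 'rV[R]_n) (N : nat) (a b : nat -> 'rV[R]_n) :
  (forall x, S x -> exists t, (t < N)%N /\ box (a t) (b t) x) ->
  (leb_n S <= (\sum_(t < N) box_vol (a t) (b t))%:E)%E.
Proof.
move=> cov.
pose a' t := if (t < N)%N then a t else 0.
pose b' t := if (t < N)%N then b t else const_mx (-1).
apply: (@le_trans _ _ (\sum_(0 <= k <oo) ((box_vol (a' k) (b' k))%:E))%E).
  apply: ereal_inf_lbound.
  exists a', b'; split => // x /cov [t [tN bx]]; exists t => //.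
  by rewrite /a' /b' tN.
rewrite le_eqVlt; apply/orP; left; apply/eqP.
rewrite (@nneseries_split R _ 0 N); last by move=> k _; rewrite lee_fin box_vol_ge0.
rewrite add0n eseries0 ?adde0; last first.
  move=> i Ni _; rewrite /a' /b' ltnNge Ni /= /box_vol.
  rewrite (eq_bigr (fun=> 0)); last by move=> j _; rewrite !mxE subr0 max_r // lerN10.
  by rewrite prodr_const card_ord expr0n gtn_eqF.
rewrite big_mkord sumEFin; congr (_%:E); apply: eq_bigr => i _.
by rewrite /a' /b' ltn_ord.
Qed.

End Core.

Section Constr.
Variables (R : realType) (n : nat) (i0 : 'I_n).

Definition e0 (l : R) : 'rV[R]_n := \row_i (if i == i0 then l else 0).
Definition e1 (r : R) : 'rV[R]_n := \row_i (if i == i0 then r else 1).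

Lemma vol_e01 l r : l <= r -> box_vol (e0 l) (e1 r) = r - l.
Proof.
move=> lr; rewrite /box_vol (bigD1 i0) //= !mxE eqxx big1 ?mulr1 ?max_l ?subr_ge0 //.
by move=> i /negbTE h; rewrite !mxE h subr0 max_l // ler01.
Qed.

Lemma box01P l r z : box (e0 l) (e1 r) z <->
  (l <= z ord0 i0 <= r /\ forall i, i != i0 -> 0 <= z ord0 i <= 1).
Proof.
split.
  move=> h; split; first by have := h i0; rewrite !mxE eqxx.
  by move=> i ne; have := h i; rewrite !mxE (negbTE ne).
move=> [h1 h2] i; rewrite !mxE; case: eqP => [->//|/eqP ne]; exact: h2.
Qed.

Lemma box00P l r z : box (e0 l) (e0 r) z <->
  (l <= z ord0 i0 <= r /\ forall i, i != i0 -> z ord0 i = 0).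
Proof.
split.
  move=> h; split; first by have := h i0; rewrite !mxE eqxx.
  by move=> i ne; have := h i; rewrite !mxE (negbTE ne) => /andP[u v]; apply/eqP; rewrite eq_le u v.
move=> [h1 h2] i; rewrite !mxE; case: eqP => [->//|/eqP ne]; by rewrite h2 // lexx.
Qed.

Variable K : nat.
Let kr : R := K%:R.

Definition Aset : set 'rV[R]_n := box (e0 0) (e1 (kr ^+ 3)) `|`
  \bigcup_(j < (K ^ 2).+1) box (e0 (j%:R * kr ^+ 2)) (e1 (j%:R * kr ^+ 2)).
Definition Bset : set 'rV[R]_n := box (e0 0) (e0 kr) `|`
  \bigcup_(j < K) box (e0 (j%:R * kr)) (e0 (j%:R * kr + 1)).

Lemma Aset_compact : compact Aset.
Proof.
apply: compactU; first exact: box_compact.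
by rewrite bigcup_mkord; apply: bigsetU_compact => i _; apply: box_compact.
Qed.

Lemma Bset_compact : compact Bset.
Proof.
apply: compactU; first exact: box_compact.
by rewrite bigcup_mkord; apply: bigsetU_compact => i _; apply: box_compact.
Qed.


Hypothesis K0 : (0 < K)%N.

Lemma kr_gt0 : 0 < kr. Proof. by rewrite ltr0n. Qed.

Lemma A2B : box (e0 0) (e1 ((K ^ 2)%:R * kr ^+ 2)) `<=` mink_sum (mink_sum Aset Bset) Bset.
Proof.
move=> z /box01P [z0 zo].
set x := z ord0 i0 in z0.
have kp := kr_gt0.
have k2p : 0 < kr ^+ 2 by rewrite exprn_gt0.
move/andP: z0 => [x0 xM].
have xk0 : 0 <= x / kr ^+ 2 by rewrite divr_ge0 // ltW.
pose q := Num.truncn (x / kr ^+ 2).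
have /andP[hq1 hq2] := Num.Theory.truncn_itv xk0.
rewrite -/q in hq1 hq2.
have qm : (q <= K ^ 2)%N.
  rewrite -(ler_nat R); apply: le_trans hq1 _.
  by rewrite ler_pdivrMr.
pose r := x - q%:R * kr ^+ 2.
have r0 : 0 <= r by rewrite subr_ge0 -ler_pdivlMr.
have rk : r < kr ^+ 2.
  have h : x < q.+1%:R * kr ^+ 2 by rewrite -ltr_pdivrMr.
  by move: h; rewrite /r -natr1 mulrDl mul1r => h; lra.
have rk0 : 0 <= r / kr by rewrite divr_ge0 // ltW.
pose j := Num.truncn (r / kr).
have /andP[hj1 hj2] := Num.Theory.truncn_itv rk0.
rewrite -/j in hj1 hj2.
have jK : (j < K)%N.
  rewrite -(ltr_nat R); apply: le_lt_trans hj1 _.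
  by rewrite ltr_pdivrMr // -expr2.
pose s := r - j%:R * kr.
have s0 : 0 <= s by rewrite subr_ge0 -ler_pdivlMr.
have sk : s <= kr.
  have h : r < j.+1%:R * kr by rewrite -ltr_pdivrMr.
  by move: h; rewrite /s -natr1 mulrDl mul1r => h; lra.
pose a : 'rV[R]_n := \row_i (if i == i0 then q%:R * kr ^+ 2 else z ord0 i).
exists (a + e0 s); split.
  exists a; split.
    right; exists q; first by rewrite /= ltnS.
    apply/box01P; rewrite !mxE eqxx lexx; split => // i ne.
    by rewrite !mxE (negbTE ne); apply: zo.
  exists (e0 s); split => //.
  by left; apply/box00P; rewrite !mxE eqxx s0 sk; split => // i ne; rewrite !mxE (negbTE ne).
exists (e0 (j%:R * kr)); split.
  right; exists j => //.
  apply/box00P; rewrite !mxE eqxx lexx ler_wpDr //; split => // i ne.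
  by rewrite !mxE (negbTE ne).
apply/rowP => i; rewrite !mxE; case: eqP => [->|_]; last by rewrite !addr0.
by rewrite /s /r /x; ring.
Qed.


Definition Wd := (2 * K).+1.
Definition T0 := (K ^ 3 + K ^ 2).+1.
Definition Ncov := (T0 + (K ^ 2).+1 * Wd)%N.
Definition ell (t : nat) : R := if (t < T0)%N then t%:R else
   ((t - T0) %/ Wd)%:R * kr ^+ 2 +
   (if ((t - T0) %% Wd <= K)%N then ((t - T0) %% Wd)%:R
    else (((t - T0) %% Wd) - K.+1)%:R * kr).

Lemma ell_big q u : (u < Wd)%N -> ell (T0 + (q * Wd + u)) =
   q%:R * kr ^+ 2 + (if (u <= K)%N then u%:R else (u - K.+1)%:R * kr).
Proof.
move=> uW; rewrite /ell ltnNge leq_addr /= addKn.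
by rewrite divnMDl // divn_small // addn0 modnMDl modn_small.
Qed.

Lemma ltN q u : (q <= K ^ 2)%N -> (u < Wd)%N -> (T0 + (q * Wd + u) < Ncov)%N.
Proof.
move=> qm uW; rewrite /Ncov ltn_add2l mulSnr -addnS; apply: leq_add => //.
by rewrite leq_mul2r qm orbT.
Qed.

Lemma AB_cover z : mink_sum Aset Bset z ->
  exists t, (t < Ncov)%N /\ box (e0 (ell t)) (e1 (ell t + 1)) z.
Proof.
case=> a [Aa [b [Bb ->]]].
have bz : forall i, i != i0 -> b ord0 i = 0.
  by case: Bb => [/box00P[]//|[j _ /box00P[]]].
have az : forall i, i != i0 -> 0 <= a ord0 i <= 1.
  by case: Aa => [/box01P[]//|[j _ /box01P[]]].
have oth : forall i, i != i0 -> 0 <= (a + b) ord0 i <= 1.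
  by move=> i ne; rewrite mxE bz // addr0 az.
suff [t [tN tb]] : exists t, (t < Ncov)%N /\ ell t <= a ord0 i0 + b ord0 i0 <= ell t + 1.
  by exists t; split => //; apply/box01P; rewrite mxE; split.
have kp := kr_gt0.
have k1 : 1 <= kr by rewrite ler1n.
have b00 : 0 <= b ord0 i0.
  case: Bb => [/box00P [/andP[u v] _]| [j jlt /box00P [/andP[u v] _]]] //.
  by apply: le_trans u; rewrite mulr_ge0 // ltW.
case: Aa => [/box01P [/andP[a00 aL] _] | [q qlt /box01P [aq _]]].
  have bb : b ord0 i0 <= kr ^+ 2.
    case: Bb => [/box00P [/andP[u v] _]| [j jlt /box00P [/andP[u v] _]]].
      by apply: le_trans v _; rewrite expr2 ler_peMl // ltW.
    have jr : j%:R + 1 <= kr by rewrite natr1 ler_nat.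
    have j0 : 0 <= j%:R :> R by [].
    have h : j%:R * kr <= (kr - 1) * kr by rewrite ler_pM2r // lerBrDr.
    by rewrite expr2; lra.
  have ab0 : 0 <= (a ord0 i0 + b ord0 i0) by rewrite addr_ge0.
  have /andP[t1 t2] := Num.Theory.truncn_itv ab0.
  exists (Num.truncn ((a ord0 i0 + b ord0 i0))); split.
    rewrite /Ncov; apply: leq_trans (leq_addr _ _); rewrite /T0 ltnS -(ler_nat R).
    apply: le_trans t1 _; rewrite natrD !natrX -/kr; lra.
  rewrite /ell /T0 ifT; last first.
    rewrite ltnS -(ler_nat R); apply: le_trans t1 _; rewrite natrD !natrX -/kr; lra.
  by rewrite t1 /= natr1 ltW.
have aq0 : a ord0 i0 = q%:R * kr ^+ 2 by apply/eqP; rewrite eq_le andbC.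
rewrite /= in qlt; have qm : (q <= K ^ 2)%N by rewrite -ltnS.
case: Bb => [/box00P [/andP[u v] _]| [j jlt /box00P [/andP[u v] _]]].
  have /andP[t1 t2] := Num.Theory.truncn_itv b00.
  set w := Num.truncn (b ord0 i0) in t1 t2.
  have wK : (w <= K)%N by rewrite -(ler_nat R); apply: le_trans t1 v.
  have wW : (w < Wd)%N by rewrite /Wd ltnS; apply: leq_trans wK _; lia.
  exists (T0 + (q * Wd + w)); split; first exact: ltN.
  rewrite ell_big // wK aq0 -addrA !lerD2l t1 /= natr1; exact: ltW.
have jW : (K.+1 + j < Wd)%N by move: jlt; rewrite /Wd /=; lia.
exists (T0 + (q * Wd + (K.+1 + j))); split; first exact: ltN.
rewrite ell_big // ifF; last by apply/negbTE; rewrite -ltnNge ltnS leq_addr.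
by rewrite addKn aq0 lerD2l u /= -addrA lerD2l.
Qed.

End Constr.

Theorem lemma4p19 (R : realType) (n : nat) (hn : (1 <= n)%N) (beta : R) (hbeta : 0 < beta) :
  exists A B : set 'rV[R]_n, compact A /\ compact B /\
    (leb_n A * leb_n (mink_sum (mink_sum A B) B) >
       beta%:E * (leb_n (mink_sum A B)) ^+ 2)%E.
Proof.
pose i0 : 'I_n := Ordinal hn.
pose K := (16 * (Num.truncn beta).+1)%N.
have K0 : (0 < K)%N by rewrite /K muln_gt0.
have K16 : (16 <= K)%N by rewrite /K leq_pmulr.
have Kb : 16 * beta < K%:R.
  have /andP[_ h] := Num.Theory.truncn_itv (ltW hbeta).
  by rewrite /K natrM ltr_pM2l.
exists (Aset R n i0 K), (Bset R n i0 K); split; first exact: Aset_compact.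
split; first exact: Bset_compact.
set A := Aset R n i0 K; set B := Bset R n i0 K.
set kr : R := K%:R.
have kp : 0 < kr by rewrite ltr0n.
have LA : ((kr ^+ 3)%:E <= leb_n A)%E.
  have := @leb_lb R n (e0 R n i0 0) (e1 R n i0 (kr ^+ 3)) A (fun x h => or_introl h).
  by rewrite vol_e01 ?subr0 // exprn_ge0 // ltW.
have L2 : (((K ^ 2)%:R * kr ^+ 2)%:E <= leb_n (mink_sum (mink_sum A B) B))%E.
  have := @leb_lb R n (e0 R n i0 0) (e1 R n i0 ((K ^ 2)%:R * kr ^+ 2)) _ (@A2B R n i0 K K0).
  by rewrite vol_e01 ?subr0 // mulr_ge0 // exprn_ge0 // ltW.
have U : (leb_n (mink_sum A B) <= (Ncov K)%:R%:E)%E.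
  have := @leb_ub R n hn (mink_sum A B) (Ncov K) (fun t => e0 R n i0 (ell R K t))
    (fun t => e1 R n i0 (ell R K t + 1)) (@AB_cover R n i0 K K0).
  move=> h; apply: le_trans h _; rewrite lee_fin le_eqVlt; apply/orP; left; apply/eqP.
  rewrite (eq_bigr (fun=> 1)); last by move=> t _; rewrite vol_e01 ?lerDl ?ler01 // addrC addKr.
  by rewrite sumr_const card_ord.
have N4 : (Ncov K <= 4 * K ^ 3)%N by rewrite /Ncov /T0 /Wd; nia.
have U0 := @leb_ge0 R n (mink_sum A B).
have hN : (Ncov K)%:R <= 4 * kr ^+ 3 :> R.
  by move: N4; rewrite -(ler_nat R) natrM natrX.
have hN0 : 0 <= (Ncov K)%:R :> R by [].
apply: (@le_lt_trans _ _ (beta * (Ncov K)%:R ^+ 2)%:E).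
  rewrite EFinM EFin_expe; apply: lee_wpmul2l; first by rewrite lee_fin ltW.
  by rewrite lee_sqr // lee_fin.
apply: (@lt_le_trans _ _ (kr ^+ 3 * ((K ^ 2)%:R * kr ^+ 2))%:E); last first.
  rewrite EFinM; apply: lee_pmul => //; rewrite lee_fin.
    by rewrite exprn_ge0 // ltW.
  by rewrite mulr_ge0 // exprn_ge0 // ltW.
rewrite lte_fin natrX -/kr.
have e : kr ^+ 3 * (kr ^+ 2 * kr ^+ 2) = kr * kr ^+ 6 by ring.
have k6 : 0 < kr ^+ 6 by rewrite exprn_gt0.
rewrite e; apply: (@le_lt_trans _ _ (beta * (16 * kr ^+ 6))).
  apply: ler_wpM2l; first exact: ltW.
  have hNN := ler_pM hN0 hN0 hN hN.
  rewrite expr2; apply: le_trans hNN _; rewrite le_eqVlt; apply/orP; left; apply/eqP; ring.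
by rewrite mulrA ltr_pM2r // mulrC.
Qed.
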